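(* For $n\ge1$, $\left|\Pi_n\wr C_2(1^11^2,1^12^2)\right|=(n+1)B(n)$, where $B(n)$ is the $n$th Bell number.
   Context: For $n\ge0$ let $[n]=\{1,\dots,n\}$. A $2$-colored set partition of $[n]$ is a set partition of $[n]$ together with an assignment of a color from $\{1,2\}$ to each element; $\Pi_n\wr C_2$ is the set of these. For a set $S$ of patterns, $\Pi_n\wr C_2(S)$ is the set of such colored partitions avoiding every pattern in $S$ in the pattern sense. For the patterns used here: $\sigma$ contains $1^11^2$ iff there are $i<j$ in the same block with $i$ colored $1$ and $j$ colored $2$; $\sigma$ contains $1^12^2$ iff there are $i<j$ in different blocks with $i$ colored $1$ and $j$ colored $2$. $B(n)$ is the number of set partitions of $[n]$. *)

(* Defs.v *)
From mathcomp Require Import all_boot.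
Set Implicit Arguments. Unset Strict Implicit. Unset Printing Implicit Defensive.

(* [n] = {1,...,n} is represented by 'I_n = {0,...,n-1} (order-preserving shift).
   Colors {1,2} are represented by 'I_2: color 1 <-> value 0, color 2 <-> value 1. *)

Definition set_partitions (n : nat) : {set {set {set 'I_n}}} :=
  [set P : {set {set 'I_n}} | partition P [set: 'I_n]].

Definition bell (n : nat) : nat := #|set_partitions n|.

Definition contains_11_12 n (P : {set {set 'I_n}}) (c : {ffun 'I_n -> 'I_2}) : bool :=
  [exists i : 'I_n, exists j : 'I_n,
     [&& i < j, [exists B in P, (i \in B) && (j \in B)],
         val (c i) == 0 & val (c j) == 1]].

Definition contains_11_22 n (P : {set {set 'I_n}}) (c : {ffun 'I_n -> 'I_2}) : bool :=
  [exists i : 'I_n, exists j : 'I_n,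
     [&& i < j, ~~ [exists B in P, (i \in B) && (j \in B)],
         val (c i) == 0 & val (c j) == 1]].

Definition avoiders (n : nat) : {set {set {set 'I_n}} * {ffun 'I_n -> 'I_2}} :=
  [set x | (x.1 \in set_partitions n) && ~~ contains_11_12 x.1 x.2
                                       && ~~ contains_11_22 x.1 x.2].

(* Main.v *)
Require Import Defs.
From mathcomp Require Import all_boot.
Set Implicit Arguments. Unset Strict Implicit. Unset Printing Implicit Defensive.

Definition good n (c : {ffun 'I_n -> 'I_2}) : bool :=
  [forall i : 'I_n, forall j : 'I_n, (i < j) ==> ~~ ((val (c i) == 0) && (val (c j) == 1))].

Lemma avoidersE n : avoiders n = setX (set_partitions n) [set c | good c].
Proof.
apply/setP => -[P c]; rewrite !inE /=.
case: (partition P [set: 'I_n]) => //=.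
rewrite /contains_11_12 /contains_11_22 /good.
apply/idP/idP.
- move=> /andP[/existsPn H1 /existsPn H2]; apply/forallP => i; apply/forallP => j.
  apply/implyP => lij; apply/negP => /andP[ci cj].
  move: (H1 i) => /existsPn /(_ j); move: (H2 i) => /existsPn /(_ j).
  by rewrite lij ci cj /= !andbT; case: [exists B in P, _].
- move=> /forallP H; apply/andP; split; apply/existsPn => i; apply/existsPn => j;
  move: (H i) => /forallP /(_ j) /implyP;
  case: (i < j) => //= /(_ isT); by case: [exists B in P, _]; case: (_ == 0); case: (_ == 1).
Qed.

Definition col n (k : 'I_n.+1) : {ffun 'I_n -> 'I_2} :=
  [ffun i : 'I_n => if val i < val k then (ord_max : 'I_2) else (ord0 : 'I_2)].

Lemma col_inj n : injective (@col n).
Proof.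
move=> k1 k2 E; apply/val_inj/eqP; rewrite eqn_leq; apply/andP; split;
  rewrite leqNgt; apply/negP => lt.
- have hk : k2 < n by move: (ltn_ord k1); rewrite ltnS; exact: leq_trans lt.
  move: (congr1 (fun f : {ffun 'I_n -> 'I_2} => val (f (Ordinal hk))) E); rewrite !ffunE /= lt ltnn //.
- have hk : k1 < n by move: (ltn_ord k2); rewrite ltnS; exact: leq_trans lt.
  move: (congr1 (fun f : {ffun 'I_n -> 'I_2} => val (f (Ordinal hk))) E); rewrite !ffunE /= lt ltnn //.
Qed.

Lemma goodE n : [set c | good c] = (@col n) @: setT.
Proof.
apply/setP => c; rewrite inE; apply/idP/imsetP.
- move=> /forallP H.
  have v01 : forall i, (val (c i) == 0) || (val (c i) == 1).
    by move=> i; case: (c i) => -[|[|m]] //.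
  case: (pickP [pred i | val (c i) == 0]) => [i0 Hi0 | none].
  + case: (arg_minnP (fun i : 'I_n => val i) Hi0) => j cj0 jmin; have cj : val (c j) == 0 := cj0; move/eqP: cj => cj.
    have hj : j < n.+1 by apply: leq_trans (ltn_ord j) _.
    exists (Ordinal hj) => //; apply/ffunP => i; rewrite ffunE /=.
    apply/val_inj => /=.
    case: ltnP => lij.
    * move: (v01 i); case: eqP => [e|_] /=; last by move/eqP.
      by have := jmin i (introT eqP e); rewrite leqNgt lij.
    * move: (v01 i); case: (eqP (x:=val (c i))) => //= _ /eqP ci.
      case: (ltngtP j i) lij => // [ji|ij] _.
      -- move: (H j) => /forallP /(_ i) /implyP Hx; move: (Hx ji); rewrite cj /= => /negP; case; apply/eqP; exact: ci.
      -- by move: cj ci; rewrite (val_inj ij) => ->.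
  + exists ord_max => //; apply/ffunP => i; rewrite ffunE /= ltn_ord.
    apply/val_inj => /=; move: (v01 i) (none i) => /= /orP[] /eqP -> //.
- move=> [k _ ->]; apply/forallP => i; apply/forallP => j; apply/implyP => lij.
  rewrite !ffunE; case: ifP => hi; case: ifP => hj //=.
  by move: (ltn_trans lij hj); rewrite hi.
Qed.

Theorem mainTheorem8 (n : nat) (hn : 1 <= n) :
  #|avoiders n| = n.+1 * bell n.
Proof.
rewrite avoidersE cardsX goodE card_imset; last exact: col_inj.
by rewrite cardsT card_ord mulnC.
Qed.
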